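(* Consider the system of ordinary differential equations \[ \dot u=r_{1}u(1-u)-a_{12}uv-a_{13}uw,\qquad \dot v=r_{2}v(1-v)+a_{21}uv,\qquad \dot w=-\mu w+a_{31}uw, \] with all parameters $r_1,r_2,\mu,a_{12},a_{13},a_{21},a_{31}$ positive. If $r_1\le a_{12}$, then every solution with positive initial data $u(0),v(0),w(0)>0$ satisfies $\lim_{t\to\infty}u(t)=0$ and $\lim_{t\to\infty}w(t)=0$. *)

(* Defs.v *)
From Stdlib Require Import Reals.
From Coquelicot Require Import Coquelicot.
Open Scope R_scope.

Definition is_solution (r1 r2 mu a12 a13 a21 a31 : R) (u v w : R -> R) : Prop :=
  (forall t, 0 < t ->
     is_derive u t (r1 * u t * (1 - u t) - a12 * u t * v t - a13 * u t * w t) /\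
     is_derive v t (r2 * v t * (1 - v t) + a21 * u t * v t) /\
     is_derive w t (- mu * w t + a31 * u t * w t)) /\
  filterlim u (at_right 0) (locally (u 0)) /\
  filterlim v (at_right 0) (locally (v 0)) /\
  filterlim w (at_right 0) (locally (w 0)).

(* Main.v *)
Require Import Defs.
From Stdlib Require Import Reals Lra Ranalysis5.
From Coquelicot Require Import Coquelicot.
Open Scope R_scope.


Lemma D_ext (f : R -> R) (x l l' : R) : is_derive f x l -> l = l' -> is_derive f x l'.
Proof. intros H ->; exact H. Qed.

Lemma D_mult (f g : R -> R) (x df dg : R) : is_derive f x df -> is_derive g x dg ->
  is_derive (fun t => f t * g t) x (df * g x + f x * dg).
Proof. intros Hf Hg. apply (is_derive_mult f g x df dg Hf Hg). intros; apply Rmult_comm. Qed.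

Lemma D_subc (f : R -> R) (x l c : R) : is_derive f x l -> is_derive (fun t => f t - c) x l.
Proof. intros Hf. eapply D_ext. apply (is_derive_minus f (fun _ => c) x l 0 Hf (is_derive_const c x)).
  unfold minus, plus, opp; simpl. ring. Qed.

Lemma D_inv (f : R -> R) (x l : R) : is_derive f x l -> f x <> 0 -> is_derive (fun t => / f t) x (- l / (f x * f x)).
Proof. intros Hf Hn. eapply D_ext. apply (is_derive_inv f x l Hf Hn). simpl. f_equal. ring. Qed.

Lemma D_explin k x : is_derive (fun t => exp (k * t)) x (k * exp (k * x)).
Proof. eapply D_ext. apply (is_derive_comp exp (fun t => k * t) x (exp (k*x)) (k*1)).
  apply is_derive_exp. apply is_derive_scal. apply (is_derive_id x).
  unfold scal; simpl; unfold mult; simpl. ring. Qed.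

Lemma der_cont (f : R -> R) (x l : R) : is_derive f x l -> continuity_pt f x.
Proof. intros H. apply continuity_pt_filterlim. apply (ex_derive_continuous f x). exists l; exact H. Qed.

Lemma mono (f df : R -> R) (a b : R) : a <= b -> (forall x, a <= x <= b -> is_derive f x (df x)) ->
  (forall x, a <= x <= b -> 0 <= df x) -> f a <= f b.
Proof. intros Hab Hd Hp. destruct (Req_dec a b) as [->|Hne]; [lra|].
  destruct (MVT_gen f a b df) as [c [Hc Heq]].
  - intros x Hx. rewrite Rmin_left in Hx by lra. rewrite Rmax_right in Hx by lra. apply Hd; lra.
  - intros x Hx. rewrite Rmin_left in Hx by lra. rewrite Rmax_right in Hx by lra. eapply der_cont; apply Hd; lra.
  - rewrite Rmin_left in Hc by lra. rewrite Rmax_right in Hc by lra.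
    assert (0 <= df c * (b - a)) by (apply Rmult_le_pos; [apply Hp; lra | lra]). lra. Qed.

Lemma mono_dec (f df : R -> R) (a b : R) : a <= b -> (forall x, a <= x <= b -> is_derive f x (df x)) ->
  (forall x, a <= x <= b -> df x <= 0) -> f b <= f a.
Proof. intros Hab Hd Hp. assert (- f a <= - f b); [|lra].
  apply (mono (fun t => - f t) (fun t => - df t)); auto.
  - intros x Hx. eapply D_ext. apply (is_derive_opp f x (df x)); auto. reflexivity.
  - intros x Hx. specialize (Hp x Hx); lra. Qed.

Lemma exp_inv k t : exp (k * t) * exp (- k * t) = 1.
Proof. rewrite <- exp_plus. replace (k*t + -k*t) with 0 by ring. apply exp_0. Qed.

Lemma decay k C c : 0 < k -> 0 < c -> exists T, forall t, T <= t -> C * exp (- k * t) <= c.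
Proof. intros Hk Hc. destruct (Rle_dec C 0) as [HC|HC].
  - exists 0. intros t _. assert (0 < exp (-k*t)) by apply exp_pos. nra.
  - exists (- ln (c / C) / k). intros t Ht.
    assert (Hl : - k * t <= ln (c / C)).
    { apply Rmult_le_compat_l with (r := k) in Ht; [|lra].
      replace (k * (- ln (c/C) / k)) with (- ln (c/C)) in Ht by (field; lra). lra. }
    assert (exp (-k*t) <= c / C).
    { rewrite <- (exp_ln (c/C)) by (apply Rdiv_lt_0_compat; lra).
      destruct (Rle_lt_or_eq_dec _ _ Hl) as [h|h]; [left; apply exp_increasing; exact h| rewrite h; lra]. }
    apply Rmult_le_compat_l with (r := C) in H; [|lra].
    replace (C * (c / C)) with c in H by (field; lra). lra. Qed.

Lemma pos (f g : R -> R) :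
  (forall t, 0 < t -> is_derive f t (f t * g t)) ->
  (forall t, 0 < t -> continuity_pt g t) ->
  filterlim f (at_right 0) (locally (f 0)) -> 0 < f 0 ->
  forall t, 0 < t -> 0 < f t.
Proof.
  intros Hd Hg Hl H0 T HT.
  destruct (proj1 (filterlim_locally f (f 0)) Hl (mkposreal _ H0)) as [d Hdl].
  set (e := Rmin (d/2) (T/2)).
  assert (He : 0 < e) by (unfold e; apply Rmin_glb_lt; destruct d; simpl; lra).
  assert (HeT : e < T) by (unfold e; pose proof (Rmin_r (d/2) (T/2)); lra).
  assert (Hfe : 0 < f e).
  { assert (Hb : ball 0 d e).
    { unfold ball; simpl; unfold AbsRing_ball, abs, minus, plus, opp; simpl.
      rewrite Ropp_0, Rplus_0_r, Rabs_pos_eq by lra. unfold e. pose proof (Rmin_l (d/2) (T/2)). destruct d; simpl in *; lra. }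
    specialize (Hdl e Hb He). revert Hdl. unfold ball; simpl; unfold AbsRing_ball, abs, minus, plus, opp; simpl.
    intros Hh. apply Rabs_def2 in Hh. lra. }
  assert (Hc : forall c, e <= c <= T -> continuity_pt (fun t => Rabs (g t)) c).
  { intros c Hc. apply (continuity_pt_comp g Rabs). apply Hg; lra. apply Rcontinuity_abs. }
  destruct (continuity_ab_maj _ e T (Rlt_le _ _ HeT) Hc) as [Mx [HM _]].
  set (M := Rabs (g Mx)).
  assert (Hnz : forall s, e <= s <= T -> f s <> 0).
  { intros s Hs Hfs.
    assert (Hm : f e * f e * exp (2*M*e) <= f s * f s * exp (2*M*s)).
    { apply (mono (fun t => f t * f t * exp (2*M*t))
              (fun t => exp (2*M*t) * (f t * f t) * (2 * g t + 2 * M))).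
      - lra.
      - intros x Hx. eapply D_ext. apply D_mult. apply D_mult; apply Hd; lra. apply D_explin. simpl. ring.
      - intros x Hx. apply Rmult_le_pos. apply Rmult_le_pos. left; apply exp_pos.
        nra. specialize (HM x ltac:(lra)). fold M in HM.
        assert (- M <= g x) by (pose proof (Rabs_Ropp (g x)); pose proof (Rle_abs (- g x)); lra). lra. }
    rewrite Hfs in Hm. assert (0 < f e * f e * exp (2*M*e)).
    { apply Rmult_lt_0_compat. nra. apply exp_pos. } lra. }
  destruct (Rlt_or_le 0 (f T)) as [h|h]; [exact h|].
  exfalso. destruct (Rle_lt_or_eq_dec _ _ h) as [h'|h']; [|apply (Hnz T); lra].
  destruct (IVT_interv (fun t => - f t) e T) as [z [Hz Hz0]].
  - intros a Ha. apply continuity_pt_opp. apply (der_cont f a (f a * g a)); apply Hd; lra.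
  - exact HeT.
  - lra.
  - lra.
  - apply (Hnz z Hz). lra.
Qed.

Lemma cont3 (u v w : R -> R) (a b c d : R) x :
  continuity_pt u x -> continuity_pt v x -> continuity_pt w x ->
  continuity_pt (fun t => a + b * u t + c * v t + d * w t) x.
Proof. intros Hu Hv Hw.
  apply continuity_pt_plus; [apply continuity_pt_plus; [apply continuity_pt_plus|]|].
  apply continuity_pt_const; intros ? ?; reflexivity.
  apply continuity_pt_scal; auto. apply continuity_pt_scal; auto. apply continuity_pt_scal; auto.
Qed.

Theorem lemma2 (r1 r2 mu a12 a13 a21 a31 : R) (u v w : R -> R)
  (hr1 : 0 < r1) (hr2 : 0 < r2) (hmu : 0 < mu) (ha12 : 0 < a12)
  (ha13 : 0 < a13) (ha21 : 0 < a21) (ha31 : 0 < a31)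
  (hsol : is_solution r1 r2 mu a12 a13 a21 a31 u v w)
  (hu0 : 0 < u 0) (hv0 : 0 < v 0) (hw0 : 0 < w 0)
  (hr : r1 <= a12) :
  is_lim u p_infty 0 /\ is_lim w p_infty 0.
Proof.
  destruct hsol as [hd [hlu [hlv hlw]]].
  assert (cu : forall t, 0 < t -> continuity_pt u t)
    by (intros t ht; eapply der_cont; apply (proj1 (hd t ht))).
  assert (cv : forall t, 0 < t -> continuity_pt v t)
    by (intros t ht; eapply der_cont; apply (proj1 (proj2 (hd t ht)))).
  assert (cw : forall t, 0 < t -> continuity_pt w t)
    by (intros t ht; eapply der_cont; apply (proj2 (proj2 (hd t ht)))).
  assert (Hu : forall t, 0 < t -> 0 < u t).
  { apply (pos u (fun t => r1 + (-r1) * u t + (-a12) * v t + (-a13) * w t)); auto.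
    - intros t ht. eapply D_ext. apply (proj1 (hd t ht)). ring.
    - intros t ht. apply cont3; auto. }
  assert (Hv : forall t, 0 < t -> 0 < v t).
  { apply (pos v (fun t => r2 + (-r2) * v t + a21 * u t + 0 * w t)); auto.
    - intros t ht. eapply D_ext. apply (proj1 (proj2 (hd t ht))). ring.
    - intros t ht. apply cont3; auto. }
  assert (Hw : forall t, 0 < t -> 0 < w t).
  { apply (pos w (fun t => - mu + a31 * u t + 0 * v t + 0 * w t)); auto.
    - intros t ht. eapply D_ext. apply (proj2 (proj2 (hd t ht))). ring.
    - intros t ht. apply cont3; auto. }
  assert (HV : forall eta, 0 < eta -> exists T, 1 <= T /\ forall t, T <= t -> 1 <= (1 + eta) * v t).
  { set (H1 := (/ v 1 - 1) * exp (r2 * 1)).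
    assert (Hm : forall t, 1 <= t -> (/ v t - 1) * exp (r2 * t) <= H1).
    { intros t ht. unfold H1.
      apply (mono_dec (fun t => (/ v t - 1) * exp (r2 * t))
        (fun x => exp (r2 * x) * (- a21 * u x / v x))); [lra| |].
      - intros x hx. assert (hx0 : 0 < x) by lra. pose proof (Hv x hx0).
        eapply D_ext. apply D_mult. apply D_subc. apply D_inv.
        apply (proj1 (proj2 (hd x hx0))). lra. apply D_explin. simpl. field. lra.
      - intros x hx. assert (hx0 : 0 < x) by lra. pose proof (Hv x hx0). pose proof (Hu x hx0).
        assert (0 < a21 * u x / v x) by (apply Rdiv_lt_0_compat; nra).
        pose proof (exp_pos (r2 * x)).
        replace (- a21 * u x / v x) with (- (a21 * u x / v x)) by (field; lra). nra. }
    intros eta heta. destruct (decay r2 H1 eta hr2 heta) as [T0 HT0].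
    exists (Rmax 1 T0). split; [apply Rmax_l|]. intros t ht.
    pose proof (Rmax_l 1 T0). pose proof (Rmax_r 1 T0).
    assert (ht0 : 0 < t) by lra. pose proof (Hv t ht0).
    specialize (Hm t ltac:(lra)). specialize (HT0 t ltac:(lra)).
    assert (Hx : (/ v t - 1) * exp (r2 * t) * exp (- r2 * t) <= H1 * exp (- r2 * t))
      by (apply Rmult_le_compat_r; [left; apply exp_pos | exact Hm]).
    rewrite Rmult_assoc, exp_inv, Rmult_1_r in Hx.
    assert (v t * / v t = 1) by (field; lra). nra. }
  assert (HU : forall eps, 0 < eps -> exists T, 1 <= T /\ forall t, T <= t -> u t <= eps).
  { intros eps heps.
    set (eta := r1 * eps / (2 * a12)).
    assert (heta : 0 < eta) by (unfold eta; apply Rdiv_lt_0_compat; nra).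
    set (k := a12 * eta).
    assert (hk : 0 < k) by (unfold k; nra).
    assert (hrk : r1 / k = 2 / eps) by (unfold k, eta; field; lra).
    destruct (HV eta heta) as [T1 [hT1 HT1]].
    set (G := (/ u T1 - r1 / k) * exp (k * T1)).
    assert (Hm : forall t, T1 <= t -> G <= (/ u t - r1 / k) * exp (k * t)).
    { intros t ht. unfold G.
      apply (mono (fun t => (/ u t - r1 / k) * exp (k * t))
        (fun x => exp (k * x) * ((- r1 + a12 * v x + a13 * w x + k) / u x))); [lra| |].
      - intros x hx. assert (hx0 : 0 < x) by lra. pose proof (Hu x hx0).
        eapply D_ext. apply D_mult. apply D_subc. apply D_inv.
        apply (proj1 (hd x hx0)). lra. apply D_explin. simpl. field. lra.
      - intros x hx. assert (hx0 : 0 < x) by lra. pose proof (Hv x hx0). pose proof (Hu x hx0).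
        pose proof (Hw x hx0). specialize (HT1 x ltac:(lra)).
        assert (v x + eta >= 1) by (destruct (Rle_lt_dec 1 (v x)); nra).
        assert (0 <= - r1 + a12 * v x + a13 * w x + k) by (unfold k; nra).
        apply Rmult_le_pos; [left; apply exp_pos|].
        apply Rmult_le_pos; [lra| left; apply Rinv_0_lt_compat; lra]. }
    destruct (decay k (- G) (/ eps) hk ltac:(apply Rinv_0_lt_compat; lra)) as [T2 HT2].
    exists (Rmax T1 T2). split; [pose proof (Rmax_l T1 T2); lra|]. intros t ht.
    pose proof (Rmax_l T1 T2). pose proof (Rmax_r T1 T2).
    assert (ht0 : 0 < t) by lra. pose proof (Hu t ht0).
    specialize (Hm t ltac:(lra)). specialize (HT2 t ltac:(lra)).
    assert (Hx : G * exp (- k * t) <= (/ u t - r1 / k) * exp (k * t) * exp (- k * t))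
      by (apply Rmult_le_compat_r; [left; apply exp_pos | exact Hm]).
    rewrite Rmult_assoc, exp_inv, Rmult_1_r, hrk in Hx.
    assert (Hinv : / eps <= / u t).
    { replace (2 / eps) with (/ eps + / eps) in Hx by (field; lra). lra. }
    assert (u t * / u t = 1) by (field; lra).
    assert (eps * / eps = 1) by (field; lra).
    assert (0 < / eps) by (apply Rinv_0_lt_compat; lra).
    nra. }
  split.
  - apply is_lim_spec. intros eps. destruct eps as [eps heps]. simpl.
    destruct (HU (eps / 2) ltac:(lra)) as [T [hT HT]].
    exists T. intros t ht. specialize (HT t ltac:(lra)).
    pose proof (Hu t ltac:(lra)).
    rewrite Rminus_0_r, Rabs_pos_eq by lra. lra.
  - apply is_lim_spec. intros eps. destruct eps as [eps heps]. simpl.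
    destruct (HU (mu / (2 * a31)) ltac:(apply Rdiv_lt_0_compat; lra)) as [Tw [hTw HTw]].
    set (W := w Tw * exp (mu / 2 * Tw)).
    assert (Hm : forall t, Tw <= t -> w t * exp (mu / 2 * t) <= W).
    { intros t ht. unfold W.
      apply (mono_dec (fun t => w t * exp (mu / 2 * t))
        (fun x => exp (mu / 2 * x) * (w x * (- (mu / 2) + a31 * u x)))); [lra| |].
      - intros x hx. assert (hx0 : 0 < x) by lra.
        eapply D_ext. apply D_mult. apply (proj2 (proj2 (hd x hx0))). apply D_explin. simpl. field.
      - intros x hx. assert (hx0 : 0 < x) by lra. pose proof (Hw x hx0).
        specialize (HTw x ltac:(lra)).
        assert (a31 * u x <= mu / 2).
        { apply Rmult_le_compat_l with (r := a31) in HTw; [|lra].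
          replace (a31 * (mu / (2 * a31))) with (mu / 2) in HTw by (field; lra). exact HTw. }
        pose proof (exp_pos (mu / 2 * x)).
        assert (w x * (- (mu / 2) + a31 * u x) <= 0) by nra. nra. }
    destruct (decay (mu / 2) W (eps / 2) ltac:(lra) ltac:(lra)) as [T2 HT2].
    exists (Rmax Tw T2). intros t ht.
    pose proof (Rmax_l Tw T2). pose proof (Rmax_r Tw T2).
    pose proof (Hw t ltac:(lra)).
    specialize (Hm t ltac:(lra)). specialize (HT2 t ltac:(lra)).
    assert (Hx : w t * exp (mu / 2 * t) * exp (- (mu / 2) * t) <= W * exp (- (mu / 2) * t))
      by (apply Rmult_le_compat_r; [left; apply exp_pos | exact Hm]).
    rewrite Rmult_assoc, exp_inv, Rmult_1_r in Hx.
    rewrite Rminus_0_r, Rabs_pos_eq by lra. lra.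
Qed.
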